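(* The calculus $\lambda^a$ terminates: if $\Gamma\vdash^a D:A$, then there is no infinite reduction sequence $D\to D_1\to D_2\to\cdots$ in $\lambda^a$.
   Context: All terms are considered up to $\alpha$-renaming; $[z/y]D$ is capture-avoiding substitution. Calculus $\lambda^a$: values $V::=*\mid\lambda y_1\ldots y_n.D$ ($n\ge1$); declarations $D::=\mathsf{let}\ x_1=V_1\ \mathsf{in}\cdots\mathsf{let}\ x_m=V_m\ \mathsf{in}\ M$ ($m\ge0$); terms $M::=x\mid @(M,M_1,\ldots,M_n)$ ($n\ge1$). Convention: if $D_i=\mathsf{let}\,(x=V)^*_i\ \mathsf{in}\ M_i$, then $@(D_0,\ldots,D_n)$ abbreviates the declaration obtained by putting all these let-prefixes (renamed apart) in front of $@(M_0,\ldots,M_n)$. Evaluation contexts $E::=\mathsf{let}\ x=V\ \mathsf{in}\ [\,]\mid E[@(x_1,\ldots,x_k,[\,],M_1,\ldots,M_l)]$ ($k,l\ge0$); writing $E=\mathsf{let}\,(x'=V')^*\ \mathsf{in}\ E'$ with $E'$ not starting with a let, $E[\mathsf{let}\,(x=V)^*\ \mathsf{in}\ M]$ denotes $\mathsf{let}\,(x=V)^*\ \mathsf{in}\ \mathsf{let}\,(x'=V')^*\ \mathsf{in}\ E'[M]$ (no capture). Structural congruence $\equiv$: least equivalence closed under $\alpha$-renaming and the syntactic operators with $\mathsf{let}\,x_1=V_1\,\mathsf{in}\,\mathsf{let}\,x_2=V_2\,\mathsf{in}\,D\equiv\mathsf{let}\,x_2=V_2\,\mathsf{in}\,\mathsf{let}\,x_1=V_1\,\mathsf{in}\,D$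 if $x_1\notin FV(V_2)$, $x_2\notin FV(V_1)$, and $\mathsf{let}\,x=V\,\mathsf{in}\,D\equiv D$ if $x\notin FV(D)$. Reduction: least relation containing $E[\mathsf{let}\,x=\lambda y_1\ldots y_n.D\ \mathsf{in}\ E'[@(x,z_1,\ldots,z_n)]]\to E[\mathsf{let}\,x=\lambda y_1\ldots y_n.D\ \mathsf{in}\ E'[[z_1/y_1,\ldots,z_n/y_n]D]]$ ($z_i$ variables) and closed under $\equiv$ on both sides. Types $A::=\langle 1\rangle\mid\langle A_1\to\cdots\to A_n\to A\rangle$ ($n\ge1$). Typing ($\Gamma$ a finite map from variables to types): $\Gamma\vdash^a x:A$ if $x:A\in\Gamma$; $\Gamma\vdash^a\mathsf{let}\,x=*\,\mathsf{in}\,D:A$ if $\Gamma,x:\langle1\rangle\vdash^a D:A$; $\Gamma\vdash^a\mathsf{let}\,x=\lambda y_1\ldots y_n.D'\,\mathsf{in}\,D:B$ if $\Gamma,y_1:A_1,\ldots,y_n:A_n\vdash^a D':C$ and $\Gamma,x:\langle A_1\to\cdots\to A_n\to C\rangle\vdash^a D:B$; $\Gamma\vdash^a @(M,N_1,\ldots,N_n):B$ if $\Gamma\vdash^a M:\langle A_1\to\cdots\to A_n\to B\rangle$ and $\Gamma\vdash^a N_i:A_i$ for all $i$. *)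

(* Defs.v *)
From Stdlib Require Import List Arith.
Import ListNotations.

Definition var := nat.

(** * Syntax (named, first-order).
    V ::= * | \y y1..yn. D   (n >= 1, stored as first param + rest)
    D ::= let x = V in D | M
    M ::= x | @(M, N, N2, ..., Nn)   (at least one argument) *)
Inductive value : Type :=
| VStar : value
| VLam  : var -> list var -> decl -> value
with decl : Type :=
| DLet  : var -> value -> decl -> decl
| DTm   : term -> decl
with term : Type :=
| TVar  : var -> term
| TApp  : term -> term -> list term -> term.

Definition memv (x : var) (l : list var) : bool := existsb (Nat.eqb x) l.

Fixpoint fv_val (V : value) : list var :=
  match V with
  | VStar => []
  | VLam y ys D => filter (fun v => negb (memv v (y :: ys))) (fv_decl D)
  end
with fv_decl (D : decl) : list var :=
  match D with
  | DLet x V D => fv_val V ++ filter (fun v => negb (Nat.eqb v x)) (fv_decl D)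
  | DTm M => fv_term M
  end
with fv_term (M : term) : list var :=
  match M with
  | TVar x => [x]
  | TApp M N Ns => fv_term M ++ fv_term N ++ concat (map fv_term Ns)
  end.

Fixpoint bv_val (V : value) : list var :=
  match V with
  | VStar => []
  | VLam y ys D => y :: ys ++ bv_decl D
  end
with bv_decl (D : decl) : list var :=
  match D with
  | DLet x V D => x :: bv_val V ++ bv_decl D
  | DTm _ => []
  end.

(** * Naive renaming of free variables (capture-avoiding whenever no variable
    in the range of the renaming is bound in the declaration). *)
Fixpoint ren_val (s : var -> var) (V : value) : value :=
  match V with
  | VStar => VStar
  | VLam y ys D =>
      VLam y ys (ren_decl (fun v => if memv v (y :: ys) then v else s v) D)
  end
with ren_decl (s : var -> var) (D : decl) : decl :=
  match D with
  | DLet x V D =>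
      DLet x (ren_val s V) (ren_decl (fun v => if Nat.eqb v x then v else s v) D)
  | DTm M => DTm (ren_term s M)
  end
with ren_term (s : var -> var) (M : term) : term :=
  match M with
  | TVar x => TVar (s x)
  | TApp M N Ns => TApp (ren_term s M) (ren_term s N) (map (ren_term s) Ns)
  end.

(** The simultaneous substitution [z1/y1, ..., zn/yn] as a map on variables
    (should some y_i coincide, the later one wins, matching the context
    extension Gamma, y1:A1, ..., yn:An of the typing rule). *)
Definition subst_map (ys zs : list var) : var -> var :=
  fold_left (fun f (p : var * var) => fun v => if Nat.eqb v (fst p) then snd p else f v)
            (combine ys zs) (fun v => v).

(** * Alpha-equivalence: equality of de Bruijn (nameless) representations. *)
Inductive nvalue : Type :=
| NStar : nvalue
| NLam  : nat -> ndecl -> nvalue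
with ndecl : Type :=
| NLet  : nvalue -> ndecl -> ndecl
| NTm   : nterm -> ndecl
with nterm : Type :=
| NBound : nat -> nterm
| NFree  : var -> nterm
| NApp   : nterm -> nterm -> list nterm -> nterm.

Fixpoint idx (x : var) (env : list var) : option nat :=
  match env with
  | [] => None
  | y :: e => if Nat.eqb x y then Some 0 else option_map S (idx x e)
  end.

Fixpoint db_val (env : list var) (V : value) : nvalue :=
  match V with
  | VStar => NStar
  | VLam y ys D => NLam (length (y :: ys)) (db_decl (rev (y :: ys) ++ env) D)
  end
with db_decl (env : list var) (D : decl) : ndecl :=
  match D with
  | DLet x V D => NLet (db_val env V) (db_decl (x :: env) D)
  | DTm M => NTm (db_term env M)
  end
with db_term (env : list var) (M : term) : nterm :=
  match M with
  | TVar x => match idx x env with Some i => NBound i | None => NFree x end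
  | TApp M N Ns => NApp (db_term env M) (db_term env N) (map (db_term env) Ns)
  end.

Definition alpha_eq (D1 D2 : decl) : Prop := db_decl [] D1 = db_decl [] D2.

Inductive sc_val : value -> value -> Prop :=
| scv_refl V : sc_val V V
| scv_lam y ys D D' : sc_decl D D' -> sc_val (VLam y ys D) (VLam y ys D')
| scv_sym V V' : sc_val V V' -> sc_val V' V
| scv_trans V1 V2 V3 : sc_val V1 V2 -> sc_val V2 V3 -> sc_val V1 V3
with sc_decl : decl -> decl -> Prop :=
| scd_alpha D D' : alpha_eq D D' -> sc_decl D D'
| scd_swap x1 V1 x2 V2 D :
    x1 <> x2 -> ~ In x1 (fv_val V2) -> ~ In x2 (fv_val V1) ->
    sc_decl (DLet x1 V1 (DLet x2 V2 D)) (DLet x2 V2 (DLet x1 V1 D))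
| scd_gc x V D : ~ In x (fv_decl D) -> sc_decl (DLet x V D) D
| scd_let_val x V V' D : sc_val V V' -> sc_decl (DLet x V D) (DLet x V' D)
| scd_let_decl x V D D' : sc_decl D D' -> sc_decl (DLet x V D) (DLet x V D')
| scd_sym D D' : sc_decl D D' -> sc_decl D' D
| scd_trans D1 D2 D3 : sc_decl D1 D2 -> sc_decl D2 D3 -> sc_decl D1 D3.

Fixpoint plets (L : list (var * value)) (D : decl) : decl :=
  match L with
  | [] => D
  | (x, V) :: L => DLet x V (plets L D)
  end.

Fixpoint split_decl (D : decl) : list (var * value) * term :=
  match D with
  | DLet x V D => let (L, M) := split_decl D in ((x, V) :: L, M)
  | DTm M => ([], M)
  end.

(** Application frames @(x1,...,xk,[ ],M1,...,Ml), listed from the outside in;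
    a frame must have k + l >= 1 (an application has at least one argument). *)
Inductive ectx : Type :=
| Hole : ectx
| Frame : list var -> ectx -> list term -> ectx.

Definition mkapp (l : list term) : term :=
  match l with
  | [] => TVar 0 (* never used on well-formed frames *)
  | [M] => M
  | M :: N :: Ns => TApp M N Ns
  end.

Fixpoint plug (F : ectx) (t : term) : term :=
  match F with
  | Hole => t
  | Frame xs F Ms => mkapp (map TVar xs ++ plug F t :: Ms)
  end.

Fixpoint ectx_ok (F : ectx) : Prop :=
  match F with
  | Hole => True
  | Frame xs F Ms => (xs <> [] \/ Ms <> []) /\ ectx_ok F
  end.

(** Base step (on representatives whose bound variables are suitably named
    apart): in the let-prefix there is a binding x = \y1..yn.Dl, not
    re-bound later, and the body has @(x,z1,...,zn) in evaluation position;
    the redex is replaced by the body of [z/y]Dl while the let-prefix of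
    [z/y]Dl is appended to the let-prefix of the whole declaration. *)
Inductive step_base : decl -> decl -> Prop :=
| step_beta (L1 L2 : list (var * value)) (x y z : var) (ys zs : list var)
    (Dl : decl) (F : ectx) :
    length ys = length zs ->
    ectx_ok F ->
    ~ In x (map fst L2) ->
    (* no capture when substituting z for y in Dl *)
    (forall w, In w (z :: zs) -> ~ In w (bv_decl Dl)) ->
    (* free variables of the function are not re-bound by x or by L2 *)
    (forall w, In w (fv_val (VLam y ys Dl)) -> ~ In w (x :: map fst L2)) ->
    (* the floated lets do not capture free variables of the body *)
    (forall w, In w (map fst (fst (split_decl (ren_decl (subst_map (y :: ys) (z :: zs)) Dl)))) ->
       ~ In w (fv_term (plug F (TApp (TVar x) (TVar z) (map TVar zs))))) ->
    step_base
      (plets (L1 ++ (x, VLam y ys Dl) :: L2)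
             (DTm (plug F (TApp (TVar x) (TVar z) (map TVar zs)))))
      (let (Ld, N) := split_decl (ren_decl (subst_map (y :: ys) (z :: zs)) Dl) in
       plets (L1 ++ (x, VLam y ys Dl) :: L2 ++ Ld) (DTm (plug F N))).

Definition red (D D' : decl) : Prop :=
  exists D1 D2, sc_decl D D1 /\ step_base D1 D2 /\ sc_decl D2 D'.

Inductive ty : Type :=
| TyUnit : ty
| TyArr  : ty -> list ty -> ty -> ty.    (* <A1 -> A2 -> ... -> An -> B>, n >= 1 *)

(** Typing contexts: finite maps from variables to types, as association
    lists; extension Gamma, x:A conses (x, A), overriding earlier entries. *)
Definition ctx := list (var * ty).

Fixpoint lookup (G : ctx) (x : var) : option ty :=
  match G with
  | [] => None
  | (y, A) :: G => if Nat.eqb x y then Some A else lookup G x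
  end.

Definition extend (G : ctx) (ys : list var) (As : list ty) : ctx :=
  rev (combine ys As) ++ G.

Inductive typ_term : ctx -> term -> ty -> Prop :=
| ty_var G x A : lookup G x = Some A -> typ_term G (TVar x) A
| ty_app G M N Ns A1 As B :
    typ_term G M (TyArr A1 As B) ->
    typ_term G N A1 ->
    Forall2 (typ_term G) Ns As ->
    typ_term G (TApp M N Ns) B.

Inductive typ_decl : ctx -> decl -> ty -> Prop :=
| ty_tm G M A : typ_term G M A -> typ_decl G (DTm M) A
| ty_let_star G x D A :
    typ_decl ((x, TyUnit) :: G) D A -> typ_decl G (DLet x VStar D) A
| ty_let_lam G x y ys Dl D A1 As C B :
    length ys = length As ->
    typ_decl (extend G (y :: ys) (A1 :: As)) Dl C ->
    typ_decl ((x, TyArr A1 As C) :: G) D B ->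
    typ_decl G (DLet x (VLam y ys Dl) D) B.

(* Main.v *)
Require Import Defs.
From Stdlib Require Import List Arith Lia Bool.
Import ListNotations.


Inductive tm : Type :=
| TStar : tm
| TFv : var -> tm
| TBv : nat -> tm
| TLam : nat -> tm -> tm
| TAp : list tm -> tm.

Section tmind.
Variable P : tm -> Prop.
Hypothesis hS : P TStar.
Hypothesis hF : forall x, P (TFv x).
Hypothesis hB : forall i, P (TBv i).
Hypothesis hL : forall n b, P b -> P (TLam n b).
Hypothesis hA : forall l, Forall P l -> P (TAp l).
Fixpoint tm_ind' (t : tm) : P t :=
  match t with
  | TStar => hS
  | TFv x => hF x
  | TBv i => hB i
  | TLam n b => hL n b (tm_ind' b)
  | TAp l => hA l ((fix go (l : list tm) : Forall P l :=
                     match l with [] => Forall_nil _ | t :: l => Forall_cons _ (tm_ind' t) (go l) end) l)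
  end.
End tmind.

Definition upr (n : nat) (r : nat -> nat) (i : nat) : nat :=
  if i <? n then i else n + r (i - n).

Fixpoint ren (r : nat -> nat) (t : tm) : tm :=
  match t with
  | TStar => TStar
  | TFv x => TFv x
  | TBv i => TBv (r i)
  | TLam n b => TLam n (ren (upr n r) b)
  | TAp l => TAp (map (ren r) l)
  end.

Definition ups (n : nat) (s : nat -> tm) (i : nat) : tm :=
  if i <? n then TBv i else ren (plus n) (s (i - n)).

Fixpoint subst (s : nat -> tm) (t : tm) : tm :=
  match t with
  | TStar => TStar
  | TFv x => TFv x
  | TBv i => s i
  | TLam n b => TLam n (subst (ups n s) b)
  | TAp l => TAp (map (subst s) l)
  end.

Lemma map_ext_Forall {A B} (f g : A -> B) l :
  Forall (fun x => f x = g x) l -> map f l = map g l.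
Proof. induction 1; simpl; f_equal; auto. Qed.

Lemma ren_ext t : forall r1 r2, (forall i, r1 i = r2 i) -> ren r1 t = ren r2 t.
Proof.
  induction t using tm_ind'; intros r1 r2 Hr; simpl; f_equal; auto.
  - apply IHt. intro i. unfold upr. rewrite Hr. reflexivity.
  - apply map_ext_Forall. eapply Forall_impl; [|eassumption]. simpl; auto.
Qed.

Lemma subst_ext t : forall s1 s2, (forall i, s1 i = s2 i) -> subst s1 t = subst s2 t.
Proof.
  induction t using tm_ind'; intros s1 s2 Hr; simpl; f_equal; auto.
  - apply IHt. intro i. unfold ups. rewrite Hr. reflexivity.
  - apply map_ext_Forall. eapply Forall_impl; [|eassumption]. simpl; auto.
Qed.

Lemma ren_ren t : forall r1 r2, ren r1 (ren r2 t) = ren (fun i => r1 (r2 i)) t.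
Proof.
  induction t using tm_ind'; intros r1 r2; simpl; f_equal; auto.
  - rewrite IHt. apply ren_ext. intro i. unfold upr.
    destruct (i <? n) eqn:E; [rewrite E; auto|].
    assert (n + r2 (i - n) <? n = false) as E2 by (apply Nat.ltb_ge; lia).
    rewrite E2. f_equal. f_equal. lia.
  - rewrite map_map. apply map_ext_Forall. eapply Forall_impl; [|eassumption]. simpl; auto.
Qed.

Lemma subst_ren t : forall s r, subst s (ren r t) = subst (fun i => s (r i)) t.
Proof.
  induction t using tm_ind'; intros s r; simpl; f_equal; auto.
  - rewrite IHt. apply subst_ext. intro i. unfold upr, ups.
    destruct (i <? n) eqn:E; [rewrite E; auto|].
    assert (n + r (i - n) <? n = false) as E2 by (apply Nat.ltb_ge; lia).
    rewrite E2. f_equal. f_equal. f_equal. lia.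
  - rewrite map_map. apply map_ext_Forall. eapply Forall_impl; [|eassumption]. simpl; auto.
Qed.

Lemma ren_subst t : forall s r, ren r (subst s t) = subst (fun i => ren r (s i)) t.
Proof.
  induction t using tm_ind'; intros s r; simpl; f_equal; auto.
  - rewrite IHt. apply subst_ext. intro i. unfold upr, ups.
    destruct (i <? n) eqn:E; simpl; [rewrite E; auto|].
    rewrite !ren_ren. apply ren_ext. intro j. unfold upr.
    assert (n + j <? n = false) as E2 by (apply Nat.ltb_ge; lia).
    rewrite E2. f_equal. f_equal. lia.
  - rewrite map_map. apply map_ext_Forall. eapply Forall_impl; [|eassumption]. simpl; auto.
Qed.

Lemma ups_ren n s t : subst (ups n s) (ren (plus n) t) = ren (plus n) (subst s t).
Proof.
  rewrite subst_ren, ren_subst. apply subst_ext. intro i. unfold ups.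
  assert (n + i <? n = false) as E2 by (apply Nat.ltb_ge; lia).
  rewrite E2. f_equal. f_equal. lia.
Qed.

Lemma subst_subst t : forall s1 s2, subst s2 (subst s1 t) = subst (fun i => subst s2 (s1 i)) t.
Proof.
  induction t using tm_ind'; intros s1 s2; simpl; f_equal; auto.
  - rewrite IHt. apply subst_ext. intro i. unfold ups at 2.
    destruct (i <? n) eqn:E; simpl.
    + unfold ups. rewrite E. auto.
    + rewrite ups_ren. unfold ups. rewrite E. reflexivity.
  - rewrite map_map. apply map_ext_Forall. eapply Forall_impl; [|eassumption]. simpl; auto.
Qed.

Lemma subst_id t : forall s, (forall i, s i = TBv i) -> subst s t = t.
Proof.
  induction t using tm_ind'; intros s Hr; simpl; f_equal; auto.
  - apply IHt. intro i. unfold ups. destruct (i <? n) eqn:E; auto.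
    rewrite Hr. simpl. f_equal. apply Nat.ltb_ge in E. lia.
  - rewrite <- map_id. apply map_ext_Forall. eapply Forall_impl; [|eassumption]. simpl; auto.
Qed.


Definition isv (t : tm) : bool :=
  match t with TStar | TFv _ | TLam _ _ => true | _ => false end.

Inductive tty (G : ctx) : list ty -> tm -> ty -> Prop :=
| tt_star D : tty G D TStar TyUnit
| tt_fv D x A : lookup G x = Some A -> tty G D (TFv x) A
| tt_bv D i A : nth_error D i = Some A -> tty G D (TBv i) A
| tt_lam D n b A1 As B : n = S (length As) -> tty G (rev (A1 :: As) ++ D) b B ->
    tty G D (TLam n b) (TyArr A1 As B)
| tt_ap D t a args A1 As B : tty G D t (TyArr A1 As B) -> tty G D a A1 -> ttys G D args As ->
    tty G D (TAp (t :: a :: args)) B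
with ttys (G : ctx) : list ty -> list tm -> list ty -> Prop :=
| tts_nil D : ttys G D [] []
| tts_cons D t ts A As : tty G D t A -> ttys G D ts As -> ttys G D (t :: ts) (A :: As).

Scheme tty_ind' := Induction for tty Sort Prop
with ttys_ind' := Induction for ttys Sort Prop.

Combined Scheme tty_mut from tty_ind', ttys_ind'.

Lemma tty_ren G :
  (forall D t A, tty G D t A -> forall D' r, (forall i B, nth_error D i = Some B -> nth_error D' (r i) = Some B) ->
     tty G D' (ren r t) A) /\
  (forall D ts As, ttys G D ts As -> forall D' r, (forall i B, nth_error D i = Some B -> nth_error D' (r i) = Some B) ->
     ttys G D' (map (ren r) ts) As).
Proof.
  apply tty_mut; intros; simpl; try (econstructor; eauto; fail).
  - constructor; auto. apply H. intros i B0 Hi. unfold upr.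
    assert (length (rev (A1 :: As)) = n) as Hl by (rewrite length_rev; simpl; lia).
    destruct (i <? n) eqn:E.
    + apply Nat.ltb_lt in E. rewrite nth_error_app1 in * by lia. auto.
    + apply Nat.ltb_ge in E. rewrite nth_error_app2 in * by lia.
      replace (n + r (i - n) - length (rev (A1 :: As))) with (r (i - n)) by lia.
      apply H0. rewrite <- Hi. f_equal. lia.
Qed.

Definition sub_args (args : list tm) (i : nat) : tm :=
  nth i (rev args) (TBv (i - length args)).

Inductive eval : tm -> nat -> option tm -> Prop :=
| ev_val t : isv t = true -> eval t 0 (Some t)
| ev_bv i : eval (TBv i) 0 None
| ev_ap l k1 vs k2 r : evall l k1 (Some vs) -> apply vs k2 r -> eval (TAp l) (k1 + k2) r
| ev_ap_stuck l k : evall l k None -> eval (TAp l) k None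
with evall : list tm -> nat -> option (list tm) -> Prop :=
| evl_nil : evall [] 0 (Some [])
| evl_cons t l k1 v k2 r : eval t k1 (Some v) -> evall l k2 r ->
    evall (t :: l) (k1 + k2) (option_map (cons v) r)
| evl_stuck t l k : eval t k None -> evall (t :: l) k None
with apply : list tm -> nat -> option tm -> Prop :=
| ap_beta n b args k r : length args = n -> eval (subst (sub_args args) b) k r ->
    apply (TLam n b :: args) (S k) r
| ap_stuck vs : (forall n b args, vs = TLam n b :: args -> length args <> n) -> apply vs 0 None.

Inductive tctx : Type :=
| THole : tctx
| TFrame : list tm -> tctx -> list tm -> tctx.

Definition mkappT (l : list tm) : tm :=
  match l with [t] => t | _ => TAp l end.

Fixpoint plugT (F : tctx) (t : tm) : tm :=
  match F with
  | THole => t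
  | TFrame vs F ts => mkappT (vs ++ plugT F t :: ts)
  end.

Fixpoint okF (F : tctx) : Prop :=
  match F with
  | THole => True
  | TFrame vs F _ => Forall (fun v => isv v = true) vs /\ okF F
  end.

Inductive tstep : tm -> tm -> Prop :=
| ts_beta F n b args : okF F -> Forall (fun v => isv v = true) args -> length args = n ->
    tstep (plugT F (TAp (TLam n b :: args))) (plugT F (subst (sub_args args) b)).

Lemma eval_val t k r : isv t = true -> eval t k r -> k = 0 /\ r = Some t.
Proof. intros Hv He. inversion He; subst; simpl in *; try discriminate; auto. Qed.

Ltac evv := match goal with H : eval ?t _ _, Hv : isv ?t = true |- _ =>
  let H1 := fresh in let H2 := fresh in
  destruct (eval_val _ _ _ Hv H) as [H1 H2]; clear H; subst; try discriminate end.

Lemma evall_vals l k r : Forall (fun v => isv v = true) l -> evall l k r -> k = 0 /\ r = Some l.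
Proof.
  intros Hf. revert k r. induction Hf; intros k r He; inversion He; subst.
  - auto.
  - evv. match goal with H : Some _ = Some _ |- _ => inversion H; subst end.
    match goal with H : evall l _ _ |- _ => destruct (IHHf _ _ H); subst end. auto.
  - evv.
Qed.

Definition Dec (t t' : tm) := forall k r, eval t k r -> exists k', k = S k' /\ eval t' k' r.

Lemma evall_dec l1 p p' l2 : Forall (fun v => isv v = true) l1 -> Dec p p' ->
  forall k r, evall (l1 ++ p :: l2) k r -> exists k', k = S k' /\ evall (l1 ++ p' :: l2) k' r.
Proof.
  intros Hf Hd. induction Hf; simpl; intros k r He.
  - inversion He; subst.
    + match goal with H : eval p _ _ |- _ => destruct (Hd _ _ H) as [k' [-> Hk']] end.
      eexists. split; [|econstructor; eauto]. lia.
    + match goal with H : eval p _ _ |- _ => destruct (Hd _ _ H) as [k' [-> Hk']] end.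
      exists k'. split; auto. econstructor; eauto.
  - inversion He; subst.
    + evv. match goal with H : Some _ = Some _ |- _ => inversion H; subst end.
      match goal with H : evall _ _ _ |- _ => destruct (IHHf _ _ H) as [k' [-> Hk']] end.
      exists k'. split; auto.
      change k' with (0 + k'). econstructor; eauto. constructor; auto.
    + evv.
Qed.

Lemma mkappT_long l : 2 <= length l -> mkappT l = TAp l.
Proof. destruct l as [|a [|b l]]; simpl; intros; try lia; auto. Qed.

Lemma Dec_ctx F : okF F -> forall t t', Dec t t' -> Dec (plugT F t) (plugT F t').
Proof.
  induction F; simpl; intros HF t t' Hd; auto. destruct HF as [Hv HF].
  specialize (IHF HF t t' Hd).
  assert (forall l1 l2, Forall (fun v => isv v = true) l1 -> 
    Dec (TAp (l1 ++ plugT F t :: l2)) (TAp (l1 ++ plugT F t' :: l2))) as Hgen.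
  { intros l1 l2 Hv1 k r He. inversion He; subst; [discriminate| |].
    + match goal with H : evall _ _ _ |- _ => destruct (evall_dec _ _ _ _ Hv1 IHF _ _ H) as [k' [-> Hk']] end.
      eexists. split; [|econstructor; eauto]. lia.
    + match goal with H : evall _ _ _ |- _ => destruct (evall_dec _ _ _ _ Hv1 IHF _ _ H) as [k' [-> Hk']] end.
      exists k'. split; auto. econstructor; eauto. }
  destruct l as [|v l]; [destruct l0 as [|u l0]|].
  - simpl. auto.
  - rewrite !mkappT_long by (simpl; lia). apply Hgen; auto.
  - rewrite !mkappT_long by (simpl; rewrite length_app; simpl; lia). apply Hgen; auto.
Qed.

Lemma Dec_beta n b args : Forall (fun v => isv v = true) args -> length args = n ->
  Dec (TAp (TLam n b :: args)) (subst (sub_args args) b).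
Proof.
  intros Hv Hl k r He. inversion He; subst; [discriminate| |].
  - match goal with H : evall _ _ _ |- _ => apply evall_vals in H; [|constructor; auto]; destruct H as [-> E] end.
    inversion E; subst.
    match goal with H : apply _ _ _ |- _ => inversion H; subst end.
    + exists k. split; auto.
    + exfalso. match goal with H : forall n b args, _ |- _ => eapply H; eauto end.
  - match goal with H : evall _ _ _ |- _ => apply evall_vals in H; [|constructor; auto]; destruct H; discriminate end.
Qed.

Lemma tstep_dec t t' : tstep t t' -> Dec t t'.
Proof. intros []. apply Dec_ctx; auto. apply Dec_beta; auto. Qed.

Lemma no_inf_tstep k : forall t r, eval t k r ->
  ~ (exists f : nat -> tm, f 0 = t /\ forall n, tstep (f n) (f (S n))).
Proof.
  induction k as [k IH] using lt_wf_ind. intros t r He [f [H0 Hs]].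
  subst. destruct (tstep_dec _ _ (Hs 0) _ _ He) as [k' [-> Hk']].
  apply (IH k' (Nat.lt_succ_diag_r _) _ _ Hk'). exists (fun n => f (S n)). split; auto.
Qed.


Fixpoint allV (P : ty -> tm -> Prop) (As : list ty) (args : list tm) : Prop :=
  match As, args with
  | [], [] => True
  | A :: As, a :: args => isv a = true /\ P A a /\ allV P As args
  | _, _ => False
  end.

Fixpoint VR (A : ty) (v : tm) {struct A} : Prop :=
  match A with
  | TyUnit => True
  | TyArr A1 As B => forall n b, v = TLam n b -> forall a1 args, length (a1 :: args) = n ->
      isv a1 = true -> VR A1 a1 -> allV VR As args ->
      exists k r, eval (subst (sub_args (a1 :: args)) b) k r /\
        (r = None \/ exists w, r = Some w /\ isv w = true /\ VR B w)
  end.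

Definition Rr (A : ty) (r : option tm) := r = None \/ exists w, r = Some w /\ isv w = true /\ VR A w.
Definition EV (A : ty) (t : tm) := exists k r, eval t k r /\ Rr A r.

Lemma allV_Forall2 As args : allV VR As args <-> Forall2 (fun A a => isv a = true /\ VR A a) As args.
Proof.
  revert args; induction As; destruct args; simpl; split; intros H; auto; try tauto;
    try (inversion H; fail).
  - destruct H as [? [? ?]]. constructor; auto. apply IHAs; auto.
  - inversion H; subst. destruct H3. repeat split; auto. apply IHAs; auto.
Qed.

Lemma V_nonlam A v : (forall n b, v <> TLam n b) -> VR A v.
Proof. destruct A; simpl; auto. intros H n b EV. exfalso. eapply H; eauto. Qed.

Lemma evall_good ts As : Forall2 (fun t A => EV A t) ts As ->
  exists k rl, evall ts k rl /\ (rl = None \/ exists vs, rl = Some vs /\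
     Forall2 (fun A a => isv a = true /\ VR A a) As vs).
Proof.
  induction 1.
  - exists 0, (Some []). split; [constructor|]. right. eauto.
  - destruct H as [k [r [He [-> | [w [-> [Hw HV]]]]]]].
    + exists k, None. split; [|auto]. constructor; auto.
    + destruct IHForall2 as [k2 [rl [Hl [-> | [vs [-> Hvs]]]]]].
      * exists (k + k2), None. split; [|auto]. change None with (option_map (cons w) None). econstructor; eauto.
      * exists (k + k2), (Some (w :: vs)). split. change (Some (w :: vs)) with (option_map (cons w) (Some vs)). econstructor; eauto.
        right. eexists; split; eauto.
Qed.

Lemma Forall2_nth_error {A B} (R : A -> B -> Prop) l1 l2 i b :
  Forall2 R l1 l2 -> nth_error l2 i = Some b -> exists a, nth_error l1 i = Some a /\ R a b.
Proof.
  intros H; revert i; induction H; intros [|i] Hi; simpl in *; try discriminate.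
  - inversion Hi; subst; eauto.
  - eauto.
Qed.

Lemma Forall2_nth_error_l {A B} (R : A -> B -> Prop) l1 l2 i a :
  Forall2 R l1 l2 -> nth_error l1 i = Some a -> exists b, nth_error l2 i = Some b /\ R a b.
Proof.
  intros H; revert i; induction H; intros [|i] Hi; simpl in *; try discriminate.
  - inversion Hi; subst; eauto.
  - eauto.
Qed.

Lemma Forall2_rev {A B} (R : A -> B -> Prop) l1 l2 : Forall2 R l1 l2 -> Forall2 R (rev l1) (rev l2).
Proof. induction 1; simpl; auto. apply Forall2_app; auto. Qed.

Lemma fundamental G :
  (forall D t A, tty G D t A -> forall s, (forall i B, nth_error D i = Some B -> isv (s i) = true /\ VR B (s i)) ->
     EV A (subst s t)) /\
  (forall D ts As, ttys G D ts As -> forall s, (forall i B, nth_error D i = Some B -> isv (s i) = true /\ VR B (s i)) ->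
     Forall2 (fun t A => EV A (subst s t)) ts As).
Proof.
  apply tty_mut; intros; simpl.
  - exists 0, (Some TStar). split; [constructor; auto|]. right. exists TStar. simpl; auto.
  - exists 0, (Some (TFv x)). split; [constructor; auto|]. right. exists (TFv x).
    repeat split; auto. apply V_nonlam. congruence.
  - destruct (H _ _ e) as [Hv HV]. exists 0, (Some (s i)). split; [constructor; auto|]. right; eauto.
  - exists 0, (Some (TLam n (subst (ups n s) b))). split; [constructor; auto|]. right.
    eexists; repeat split; eauto. simpl. intros n0 b0 Heq a1 args Hlen Ha1 HV1 HVs.
    inversion Heq; subst n0 b0. rewrite subst_subst.
    apply H. intros i B0 Hi.
    assert (Hl : length (rev (A1 :: As)) = n) by (rewrite length_rev; simpl; lia).
    unfold ups. rewrite <- H2. destruct (i <? n) eqn:Ei.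
    + apply Nat.ltb_lt in Ei. rewrite nth_error_app1 in Hi by lia. simpl subst.
      assert (HF : Forall2 (fun A a => isv a = true /\ VR A a) (A1 :: As) (a1 :: args)).
      { constructor; auto. apply allV_Forall2; auto. }
      apply Forall2_rev in HF. destruct (Forall2_nth_error_l _ _ _ _ _ HF Hi) as [a [Ha [Hva HVa]]].
      unfold sub_args. erewrite nth_error_nth; eauto.
    + apply Nat.ltb_ge in Ei. rewrite nth_error_app2 in Hi by lia.
      rewrite subst_ren. rewrite subst_id.
      * apply H0. rewrite <- Hi. f_equal. lia.
      * intro j. unfold sub_args. rewrite nth_overflow by (rewrite length_rev; simpl; lia).
        f_equal. simpl. lia.
  -
    specialize (H s H2). specialize (H0 s H2). specialize (H1 s H2).
    destruct H as [k [r [He [-> | [w [-> [Hw HV]]]]]]].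
    + exists k, None. split; [|left; auto]. apply ev_ap_stuck. constructor; auto.
    + destruct (evall_good (subst s a :: map (subst s) args) (A1 :: As)) as [k2 [rl [Hl [-> | [vs [-> Hvs]]]]]].
      { constructor; auto. clear -H1. induction H1; simpl; constructor; auto. }
      * exists (k + k2), None. split; [|left; auto]. apply ev_ap_stuck.
        change None with (option_map (cons w) None). econstructor; eauto.
      * assert (Hcase : (exists n b, w = TLam n b /\ length vs = n) \/
                        (forall n b args, w :: vs = TLam n b :: args -> length args <> n)).
        { destruct w; try (right; intros; discriminate).
          destruct (Nat.eq_dec (length vs) n); [left; eauto|right]. intros n' b' args' Heq; inversion Heq; subst; auto. }
        destruct Hcase as [[n [b [-> Hlen]]] | Hst].
        -- inversion Hvs as [|A0 a1 As0 args1 [Hv1 HV1] HF]; subst.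
           simpl in HV. destruct (HV _ _ eq_refl a1 args1 eq_refl Hv1 HV1) as [k3 [r3 [He3 Hr3]]].
           { apply allV_Forall2; auto. }
           exists ((k + k2) + S k3), r3. split; [|exact Hr3].
           econstructor; [exact (evl_cons _ _ _ _ _ (Some (a1 :: args1)) He Hl)|].
           constructor; auto.
        -- exists ((k + k2) + 0), None. split; [|left; auto].
           econstructor; [exact (evl_cons _ _ _ _ _ (Some vs) He Hl)|].
           constructor; auto.
  - constructor.
  - constructor; auto.
Qed.

Lemma tty_terminates G t A : tty G [] t A -> exists k r, eval t k r.
Proof.
  intros H. destruct (proj1 (fundamental G) _ _ _ H TBv) as [k [r [He _]]].
  { intros i B Hi. destruct i; discriminate. }
  rewrite subst_id in He by auto. eauto.
Qed.


Section srcind.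
Variables (Pv : value -> Prop) (Pd : decl -> Prop) (Pt : term -> Prop).
Hypothesis hstar : Pv VStar.
Hypothesis hlam : forall y ys D, Pd D -> Pv (VLam y ys D).
Hypothesis hlet : forall x V D, Pv V -> Pd D -> Pd (DLet x V D).
Hypothesis htm : forall M, Pt M -> Pd (DTm M).
Hypothesis hvar : forall x, Pt (TVar x).
Hypothesis happ : forall M N Ns, Pt M -> Pt N -> Forall Pt Ns -> Pt (TApp M N Ns).
Fixpoint val_ind' (V : value) : Pv V :=
  match V with
  | VStar => hstar
  | VLam y ys D => hlam y ys D (decl_ind' D)
  end
with decl_ind' (D : decl) : Pd D :=
  match D with
  | DLet x V D => hlet x V D (val_ind' V) (decl_ind' D)
  | DTm M => htm M (term_ind' M)
  end
with term_ind' (M : term) : Pt M :=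
  match M with
  | TVar x => hvar x
  | TApp M N Ns => happ M N Ns (term_ind' M) (term_ind' N)
      ((fix go (l : list term) : Forall Pt l :=
         match l with [] => Forall_nil _ | t :: l => Forall_cons _ (term_ind' t) (go l) end) Ns)
  end.
Lemma src_ind : (forall V, Pv V) /\ (forall D, Pd D) /\ (forall M, Pt M).
Proof. split; [exact val_ind'|split; [exact decl_ind'|exact term_ind']]. Qed.
End srcind.

Definition upd (r : var -> tm) (x : var) (c : tm) (w : var) : tm :=
  if Nat.eqb w x then c else r w.

Definition lamenv (ps : list var) (r : var -> tm) (w : var) : tm :=
  match idx w (rev ps) with
  | Some j => TBv j
  | None => ren (plus (length ps)) (r w)
  end.

Fixpoint uv (r : var -> tm) (V : value) : tm :=
  match V with
  | VStar => TStar
  | VLam y ys D => TLam (length (y :: ys)) (ud (lamenv (y :: ys) r) D)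
  end
with ud (r : var -> tm) (D : decl) : tm :=
  match D with
  | DLet x V D => ud (upd r x (uv r V)) D
  | DTm M => ut r M
  end
with ut (r : var -> tm) (M : term) : tm :=
  match M with
  | TVar x => r x
  | TApp M N Ns => TAp (ut r M :: ut r N :: map (ut r) Ns)
  end.

Lemma idx_None w l : idx w l = None <-> ~ In w l.
Proof.
  induction l as [|a l IH]; simpl; [tauto|]. destruct (Nat.eqb w a) eqn:E.
  - apply Nat.eqb_eq in E. subst. split; [discriminate|]. intros H; exfalso; auto.
  - apply Nat.eqb_neq in E. destruct (idx w l) eqn:E2; simpl.
    + split; [discriminate|]. intros H. exfalso. apply H. right.
      destruct (In_dec Nat.eq_dec w l) as [i|ni]; auto. apply IH in ni. discriminate.
    + split; auto. intros _ [C|C]; [auto|]. apply IH in C; auto.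
Qed.

Lemma idx_Some_lt w l j : idx w l = Some j -> j < length l.
Proof.
  revert j; induction l; simpl; intros j H; [discriminate|].
  destruct (Nat.eqb w a); [inversion H; lia|]. destruct (idx w l) eqn:E; simpl in H; inversion H; subst.
  specialize (IHl _ eq_refl). lia.
Qed.

Lemma idx_Some_In w l j : idx w l = Some j -> In w l.
Proof.
  intros H. destruct (In_dec Nat.eq_dec w l) as [i|ni]; auto. apply idx_None in ni. congruence.
Qed.

Lemma memv_false w l : memv w l = false <-> ~ In w l.
Proof.
  unfold memv. rewrite <- not_true_iff_false, existsb_exists. split.
  - intros H C. apply H. exists w. split; auto. apply Nat.eqb_refl.
  - intros H [x [Hx Ex]]. apply Nat.eqb_eq in Ex. subst. auto.
Qed.

Lemma memv_true w l : memv w l = true <-> In w l.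
Proof.
  split; intros H.
  - destruct (In_dec Nat.eq_dec w l); auto. apply memv_false in n. congruence.
  - destruct (memv w l) eqn:E; auto. apply memv_false in E. contradiction.
Qed.

Lemma idx_app w l1 l2 : idx w (l1 ++ l2) =
  match idx w l1 with Some j => Some j | None => option_map (plus (length l1)) (idx w l2) end.
Proof.
  induction l1; simpl.
  - destruct (idx w l2); auto.
  - destruct (Nat.eqb w a); auto. rewrite IHl1. destruct (idx w l1); simpl; auto.
    destruct (idx w l2); simpl; auto.
Qed.

Lemma in_concat_map {A B} (f : A -> list B) l x b : In x l -> In b (f x) -> In b (concat (map f l)).
Proof. intros. apply in_concat. exists (f x). split; auto. apply in_map; auto. Qed.

Lemma u_ext :
  (forall V r1 r2, (forall w, In w (fv_val V) -> r1 w = r2 w) -> uv r1 V = uv r2 V) /\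
  (forall D r1 r2, (forall w, In w (fv_decl D) -> r1 w = r2 w) -> ud r1 D = ud r2 D) /\
  (forall M r1 r2, (forall w, In w (fv_term M) -> r1 w = r2 w) -> ut r1 M = ut r2 M).
Proof.
  apply src_ind; intros; simpl in *; auto.
  - f_equal. apply H. intros w Hw. unfold lamenv.
    destruct (idx w (rev (y :: ys))) eqn:E; auto.
    rewrite H0; auto. apply filter_In. split; auto.
    rewrite negb_true_iff. change ((w =? y) || memv w ys) with (memv w (y::ys)). apply memv_false.
    intro C. apply idx_None in E. apply E. rewrite <- in_rev. exact C.
  - assert (uv r1 V = uv r2 V) as HV by (apply H; intros; apply H1; apply in_or_app; auto).
    rewrite HV. apply H0. intros w Hw. unfold upd. destruct (Nat.eqb w x) eqn:E; auto.
    apply H1. apply in_or_app. right. apply filter_In. rewrite E. auto.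
  - f_equal. f_equal; [apply H|f_equal; [apply H0|]].
    + intros; apply H2; apply in_or_app; auto.
    + intros; apply H2; apply in_or_app; right; apply in_or_app; auto.
    + apply map_ext_Forall. rewrite Forall_forall in *. intros t Ht. apply H1; auto.
      intros w Hw. apply H2. apply in_or_app; right; apply in_or_app; right.
      eapply in_concat_map; eauto.
Qed.

Definition ud_ext := proj1 (proj2 u_ext).
Definition uv_ext := proj1 u_ext.
Definition ut_ext := proj2 (proj2 u_ext).


Fixpoint nuv (E : list tm) (r : var -> tm) (v : nvalue) : tm :=
  match v with
  | NStar => TStar
  | NLam n d => TLam n (nud (map TBv (seq 0 n) ++ map (ren (plus n)) E) (fun w => ren (plus n) (r w)) d)
  end
with nud (E : list tm) (r : var -> tm) (d : ndecl) : tm :=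
  match d with
  | NLet v d => nud (nuv E r v :: E) r d
  | NTm m => nut E r m
  end
with nut (E : list tm) (r : var -> tm) (m : nterm) : tm :=
  match m with
  | NBound i => nth i E TStar
  | NFree x => r x
  | NApp m1 m2 ms => TAp (nut E r m1 :: nut E r m2 :: map (nut E r) ms)
  end.

Definition cmb (env : list var) (E : list tm) (r : var -> tm) (w : var) : tm :=
  match idx w env with Some i => nth i E TStar | None => r w end.

Lemma u_db :
  (forall V env E r, length E = length env -> uv (cmb env E r) V = nuv E r (db_val env V)) /\
  (forall D env E r, length E = length env -> ud (cmb env E r) D = nud E r (db_decl env D)) /\
  (forall M env E r, length E = length env -> ut (cmb env E r) M = nut E r (db_term env M)).
Proof.
  apply src_ind; intros.
  - auto.
  - cbn [uv db_val nuv]. f_equal. set (ps := y :: ys) in *. set (n := length ps).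
    rewrite <- H.
    + apply ud_ext. intros w _. unfold lamenv, cmb. rewrite idx_app.
      rewrite length_rev. fold n.
      destruct (idx w (rev ps)) eqn:E1.
      * assert (n0 < n) by (apply idx_Some_lt in E1; rewrite length_rev in E1; auto).
        rewrite app_nth1 by (rewrite length_map, length_seq; lia).
        rewrite nth_indep with (d' := TBv 0) by (rewrite length_map, length_seq; lia).
        rewrite map_nth, seq_nth by lia. auto.
      * destruct (idx w env) eqn:E2; simpl.
        -- rewrite app_nth2 by (rewrite length_map, length_seq; lia).
           rewrite length_map, length_seq. replace (n + n0 - n) with n0 by lia.
           change TStar with (ren (plus n) TStar) at 2. rewrite map_nth. replace (length ys + n0 - length ys) with n0 by lia. reflexivity.
        -- auto.
    + rewrite !length_app, length_map, length_seq, length_map, length_rev, H0. auto.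
  - simpl. rewrite <- H0 by (simpl; lia). rewrite <- H by auto. apply ud_ext. intros w _.
    unfold upd, cmb. simpl. destruct (w =? x); simpl; auto. destruct (idx w env); simpl; auto.
  - simpl; auto.
  - simpl. unfold cmb. destruct (idx x env); auto.
  - simpl. f_equal. f_equal; [auto|f_equal; [auto|]]. rewrite map_map.
    apply map_ext_Forall. rewrite Forall_forall in *. intros; auto.
Qed.

Lemma ud_alpha D D' r : alpha_eq D D' -> ud r D = ud r D'.
Proof.
  intros H. unfold alpha_eq in H.
  change (ud (cmb [] [] r) D = ud (cmb [] [] r) D').
  rewrite (proj1 (proj2 u_db) D [] [] r eq_refl), (proj1 (proj2 u_db) D' [] [] r eq_refl).
  rewrite H. auto.
Qed.


Scheme scv_ind' := Induction for sc_val Sort Prop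
with scd_ind' := Induction for sc_decl Sort Prop.
Combined Scheme sc_mut from scv_ind', scd_ind'.

Lemma sc_u :
  (forall V V', sc_val V V' -> forall r, uv r V = uv r V') /\
  (forall D D', sc_decl D D' -> forall r, ud r D = ud r D').
Proof.
  apply sc_mut; intros; simpl; auto.
  - f_equal. auto.
  - rewrite H, H0. auto.
  - apply ud_alpha; auto.
  - assert (uv (upd r x1 (uv r V1)) V2 = uv r V2) as E2.
    { apply uv_ext. intros w Hw. unfold upd. destruct (w =? x1) eqn:E; auto.
      apply Nat.eqb_eq in E. subst. contradiction. }
    assert (uv (upd r x2 (uv r V2)) V1 = uv r V1) as E1.
    { apply uv_ext. intros w Hw. unfold upd. destruct (w =? x2) eqn:E; auto.
      apply Nat.eqb_eq in E. subst. contradiction. }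
    rewrite E1, E2. apply ud_ext. intros w _. unfold upd.
    destruct (w =? x1) eqn:Ea, (w =? x2) eqn:Eb; auto.
    apply Nat.eqb_eq in Ea, Eb. subst. contradiction.
  - apply ud_ext. intros w Hw. unfold upd. destruct (w =? x) eqn:E; auto.
    apply Nat.eqb_eq in E. subst. contradiction.
  - rewrite H. auto.
  - rewrite H, H0. auto.
Qed.

Lemma sc_ud D D' r : sc_decl D D' -> ud r D = ud r D'.
Proof. intros H. apply (proj2 sc_u); auto. Qed.


Lemma u_ren :
  (forall V s r, (forall v, s v <> v -> ~ In (s v) (bv_val V)) -> uv r (ren_val s V) = uv (fun v => r (s v)) V) /\
  (forall D s r, (forall v, s v <> v -> ~ In (s v) (bv_decl D)) -> ud r (ren_decl s D) = ud (fun v => r (s v)) D) /\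
  (forall M s r, ut r (ren_term s M) = ut (fun v => r (s v)) M).
Proof.
  apply src_ind; intros.
  - auto.
  - cbn [ren_val uv]. f_equal. set (ps := y :: ys) in *.
    rewrite H.
    + apply ud_ext. intros w _. unfold lamenv.
      destruct (memv w ps) eqn:Em.
      * destruct (idx w (rev ps)) eqn:Ei; auto. exfalso. apply idx_None in Ei. apply Ei.
        rewrite <- in_rev. apply memv_true. auto.
      * assert (idx w (rev ps) = None) as Ei by (apply idx_None; rewrite <- in_rev; apply memv_false; auto).
        rewrite Ei. destruct (Nat.eq_dec (s w) w) as [Eq|Neq].
        -- rewrite Eq, Ei. auto.
        -- assert (~ In (s w) ps) as Hn.
           { intro C. apply (H0 w Neq). simpl. unfold ps in C. destruct C; auto. right. apply in_or_app; auto. }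
           assert (idx (s w) (rev ps) = None) as Ei2 by (apply idx_None; rewrite <- in_rev; auto).
           rewrite Ei2. auto.
    + intros v Hv. destruct (memv v ps) eqn:Em; [congruence|].
      intro C. apply (H0 v Hv). simpl. right. apply in_or_app. auto.
  - cbn [ren_decl ud]. rewrite H by (intros v Hv C; apply (H1 v Hv); simpl; right; apply in_or_app; auto).
    rewrite H0.
    + apply ud_ext. intros w _. unfold upd. destruct (w =? x) eqn:E.
      * apply Nat.eqb_eq in E. subst. rewrite Nat.eqb_refl. auto.
      * destruct (s w =? x) eqn:E2; auto. apply Nat.eqb_eq in E2. exfalso.
        apply Nat.eqb_neq in E. apply (H1 w); [congruence|]. rewrite E2. simpl. auto.
    + intros v Hv. destruct (v =? x) eqn:E; [congruence|].
      intro C. apply (H1 v Hv). simpl. right. apply in_or_app. auto.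
  - simpl. auto.
  - simpl. auto.
  - simpl. f_equal. f_equal; [auto|f_equal; [auto|]]. rewrite map_map.
    apply map_ext_Forall. rewrite Forall_forall in *. intros; auto.
Qed.

Lemma u_subst :
  (forall V s r, subst s (uv r V) = uv (fun w => subst s (r w)) V) /\
  (forall D s r, subst s (ud r D) = ud (fun w => subst s (r w)) D) /\
  (forall M s r, subst s (ut r M) = ut (fun w => subst s (r w)) M).
Proof.
  apply src_ind; intros.
  - auto.
  - cbn [uv subst]. f_equal. rewrite H. apply ud_ext. intros w _. unfold lamenv.
    destruct (idx w (rev (y :: ys))) eqn:E.
    + simpl. unfold ups. apply idx_Some_lt in E. rewrite length_rev in E.
      simpl length in E. apply Nat.ltb_lt in E. rewrite E. auto.
    + apply ups_ren.
  - cbn [ud]. rewrite H0. apply ud_ext. intros w _. unfold upd. destruct (w =? x); auto.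
  - simpl. auto.
  - simpl. auto.
  - simpl. f_equal. f_equal; [auto|f_equal; [auto|]]. rewrite !map_map.
    apply map_ext_Forall. rewrite Forall_forall in *. intros; auto.
Qed.

Lemma combine_app {A B} (l1 l2 : list A) (m1 m2 : list B) : length l1 = length m1 ->
  combine (l1 ++ l2) (m1 ++ m2) = combine l1 m1 ++ combine l2 m2.
Proof. revert m1; induction l1; destruct m1; simpl; intros; try discriminate; f_equal; auto. Qed.

Lemma subst_map_char ps qs : length ps = length qs -> forall w,
  subst_map ps qs w = match idx w (rev ps) with Some j => nth j (rev qs) w | None => w end.
Proof.
  revert qs. induction ps as [|p ps IH] using rev_ind; intros qs Hl w.
  - destruct qs; try discriminate. reflexivity.
  - destruct qs as [|q qs _] using rev_ind; [rewrite length_app in Hl; simpl in Hl; lia|].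
    rewrite !length_app in Hl; simpl in Hl.
    unfold subst_map. rewrite combine_app by lia. rewrite fold_left_app. simpl.
    fold (subst_map ps qs). rewrite !rev_app_distr. simpl.
    destruct (w =? p); auto. rewrite IH by lia. destruct (idx w (rev ps)); simpl; auto.
Qed.

Lemma subst_map_in ps qs w : length ps = length qs -> subst_map ps qs w <> w -> In (subst_map ps qs w) qs.
Proof.
  intros Hl. rewrite subst_map_char by auto. destruct (idx w (rev ps)) eqn:E; [|congruence].
  intros _. apply idx_Some_lt in E. rewrite length_rev in E. rewrite in_rev. apply nth_In.
  rewrite length_rev; lia.
Qed.

Fixpoint penv (r : var -> tm) (L : list (var * value)) : var -> tm :=
  match L with
  | [] => r
  | (x, V) :: L => penv (upd r x (uv r V)) L
  end.

Lemma ud_plets L : forall r D, ud r (plets L D) = ud (penv r L) D.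
Proof. induction L as [|[x V] L IH]; simpl; auto. Qed.

Lemma penv_app L1 L2 : forall r, penv r (L1 ++ L2) = penv (penv r L1) L2.
Proof. induction L1 as [|[x V] L IH]; simpl; auto. Qed.

Lemma penv_notin L : forall r w, ~ In w (map fst L) -> penv r L w = r w.
Proof.
  induction L as [|[x V] L IH]; simpl; auto. intros r w Hn. rewrite IH by tauto.
  unfold upd. destruct (w =? x) eqn:E; auto. apply Nat.eqb_eq in E. subst. tauto.
Qed.

Definition vals (r : var -> tm) := forall w, isv (r w) = true.

Lemma uv_val r V : isv (uv r V) = true.
Proof. destruct V; reflexivity. Qed.

Lemma penv_vals L : forall r, vals r -> vals (penv r L).
Proof.
  induction L as [|[x V] L IH]; simpl; auto. intros r Hr. apply IH.
  intro w. unfold upd. destruct (w =? x); auto. apply uv_val.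
Qed.

Lemma split_plets D : plets (fst (split_decl D)) (DTm (snd (split_decl D))) = D.
Proof.
  induction D; simpl; auto. destruct (split_decl D) as [L M]. simpl in *. rewrite IHD. auto.
Qed.

Fixpoint uF (r : var -> tm) (F : ectx) : tctx :=
  match F with
  | Hole => THole
  | Frame xs F Ms => TFrame (map r xs) (uF r F) (map (ut r) Ms)
  end.

Lemma ut_mkapp r l : l <> [] -> ut r (mkapp l) = mkappT (map (ut r) l).
Proof. destruct l as [|a [|b l]]; simpl; intros; auto; congruence. Qed.

Lemma ut_plug r F t : ut r (plug F t) = plugT (uF r F) (ut r t).
Proof.
  induction F; simpl; auto. rewrite ut_mkapp by (destruct l; discriminate).
  rewrite map_app. simpl. rewrite map_map, IHF. auto.
Qed.

Lemma fv_mkapp l w t : In t l -> In w (fv_term t) -> In w (fv_term (mkapp l)).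
Proof.
  destruct l as [|a [|b l]]; simpl; intros Ht Hw; try contradiction.
  - destruct Ht as [->|[]]; auto.
  - destruct Ht as [->|[->|Ht]].
    + apply in_or_app; auto.
    + apply in_or_app; right; apply in_or_app; auto.
    + apply in_or_app; right; apply in_or_app; right; eapply in_concat_map; eauto.
Qed.

Lemma uF_ext F t r1 r2 : (forall w, In w (fv_term (plug F t)) -> r1 w = r2 w) -> uF r1 F = uF r2 F.
Proof.
  induction F; simpl; intros H; auto. f_equal.
  - apply map_ext_in. intros x Hx. apply H. eapply fv_mkapp.
    + apply in_or_app. left. apply in_map. eauto.
    + simpl. auto.
  - apply IHF. intros w Hw. apply H. eapply fv_mkapp; eauto. apply in_or_app. right. left. auto.
  - apply map_ext_in. intros M HM. apply ut_ext. intros w Hw. apply H. eapply fv_mkapp; eauto.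
    apply in_or_app. right. right. auto.
Qed.

Lemma uF_ok r F : vals r -> okF (uF r F).
Proof.
  intros Hr. induction F; simpl; auto. split; auto. apply Forall_forall. intros v Hv.
  apply in_map_iff in Hv. destruct Hv as [x [<- _]]. apply Hr.
Qed.


Lemma sub_args_ren args t : subst (sub_args args) (ren (plus (length args)) t) = t.
Proof.
  rewrite subst_ren. apply subst_id. intro i. unfold sub_args.
  rewrite nth_overflow by (rewrite length_rev; lia). f_equal. lia.
Qed.

Lemma step_sim D1 D2 r : vals r -> step_base D1 D2 -> tstep (ud r D1) (ud r D2).
Proof.
  intros Hr H. destruct H as [L1 L2 x y z ys zs Dl F Hlen Hok Hx Hcap Hfv Hfl].
  set (sg := subst_map (y :: ys) (z :: zs)).
  destruct (split_decl (ren_decl sg Dl)) as [Ld N] eqn:Es.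
  rewrite !ud_plets, !penv_app. cbn [penv].
  rewrite penv_app.
  set (r1 := penv r L1). set (cl := uv r1 (VLam y ys Dl)).
  set (r2 := penv (upd r1 x cl) L2). set (r3 := penv r2 Ld).
  assert (Hv1 : vals r1) by (apply penv_vals; auto).
  assert (Hv2 : vals r2).
  { apply penv_vals. intro w. unfold upd. destruct (w =? x); [apply uv_val|apply Hv1]. }
  cbn [ud]. rewrite !ut_plug.
  assert (HF : uF r3 F = uF r2 F).
  { apply (uF_ext F (TApp (TVar x) (TVar z) (map TVar zs))). intros w Hw.
    apply penv_notin. intro C. apply (Hfl w); auto. change (subst_map (y :: ys) (z :: zs)) with sg. rewrite Es. exact C. }
  rewrite HF.
  assert (Hx2 : r2 x = cl).
  { unfold r2. rewrite penv_notin by auto. unfold upd. rewrite Nat.eqb_refl. auto. }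
  set (args := map r2 (z :: zs)).
  assert (Happ : ut r2 (TApp (TVar x) (TVar z) (map TVar zs)) = TAp (cl :: args)).
  { simpl. rewrite map_map. rewrite Hx2. auto. }
  rewrite Happ.
  set (ps := y :: ys).
  assert (Hlen2 : length ps = length (z :: zs)) by (simpl; lia).
  assert (HN : ut r3 N = subst (sub_args args) (ud (lamenv ps r1) Dl)).
  { assert (ut r3 N = ud r2 (ren_decl sg Dl)) as ->.
    { rewrite <- (split_plets (ren_decl sg Dl)), Es. simpl. rewrite ud_plets. auto. }
    rewrite (proj1 (proj2 u_ren)).
    2: { intros v Hv. apply Hcap. apply subst_map_in; auto. }
    rewrite (proj1 (proj2 u_subst)). apply ud_ext. intros w Hw.
    unfold lamenv, sg. rewrite subst_map_char by auto. fold ps.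
    destruct (idx w (rev ps)) eqn:Ei.
    - simpl. unfold sub_args. unfold args.
      assert (n < length (rev (z :: zs))).
      { apply idx_Some_lt in Ei. rewrite length_rev in *. lia. }
      rewrite <- map_rev. rewrite nth_indep with (d' := r2 w) by (rewrite length_map; auto).
      rewrite map_nth. auto.
    - replace (length ps) with (length args) by (unfold args; rewrite length_map; auto).
      rewrite sub_args_ren.
      assert (Hw2 : In w (fv_val (VLam y ys Dl))).
      { cbn [fv_val]. apply filter_In. split; auto. rewrite negb_true_iff. apply memv_false.
        intro C. apply idx_None in Ei. apply Ei. rewrite <- in_rev. exact C. }
      specialize (Hfv w Hw2). unfold r2. rewrite penv_notin by (intro C; apply Hfv; right; auto).
      unfold upd. destruct (w =? x) eqn:E; auto. apply Nat.eqb_eq in E. subst. exfalso. apply Hfv. left. auto. }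
  rewrite HN. unfold cl. cbn [uv]. fold ps.
  apply ts_beta.
  - apply uF_ok; auto.
  - unfold args. apply Forall_forall. intros v Hv. apply in_map_iff in Hv. destruct Hv as [w [<- _]]. apply Hv2.
  - unfold args. rewrite length_map. auto.
Qed.


Lemma rev_combine {A B} (l : list A) (m : list B) : length l = length m ->
  rev (combine l m) = combine (rev l) (rev m).
Proof.
  revert m; induction l; destruct m; simpl; intros H; try discriminate; auto.
  rewrite IHl by lia. rewrite combine_app by (rewrite !length_rev; lia). auto.
Qed.

Lemma lookup_combine qs Bs G w : length qs = length Bs ->
  lookup (combine qs Bs ++ G) w = match idx w qs with Some j => nth_error Bs j | None => lookup G w end.
Proof.
  revert Bs; induction qs; destruct Bs; simpl; intros H; try discriminate; auto.
  destruct (w =? a); auto. rewrite IHqs by lia. destruct (idx w qs); simpl; auto.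
Qed.

Definition goodr G0 (Gs : ctx) D (r : var -> tm) := forall w B, lookup Gs w = Some B -> tty G0 D (r w) B.

Lemma ut_typ G0 : forall M Gs A, typ_term Gs M A -> forall r D, goodr G0 Gs D r -> tty G0 D (ut r M) A.
Proof.
  set (P := fun M => forall Gs A, typ_term Gs M A -> forall r D, goodr G0 Gs D r -> tty G0 D (ut r M) A).
  assert (h1 : forall x, P (TVar x)).
  { intros x Gs A H r D Hg. inversion H; subst. simpl. apply Hg. auto. }
  assert (h2 : forall M N Ns, P M -> P N -> Forall P Ns -> P (TApp M N Ns)).
  { intros M N Ns IHM IHN IHNs Gs A H r D Hg. inversion H; subst. simpl.
    econstructor; eauto.
    match goal with H : Forall2 _ Ns _ |- _ => revert H end. clear H. revert IHNs.
    generalize As. induction Ns; intros As0 HP HF; inversion HF; subst; simpl; constructor;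
      inversion HP; subst; eauto. }
  exact (proj2 (proj2 (src_ind (fun _ => True) (fun _ => True) P
    I (fun _ _ _ _ => I) (fun _ _ _ _ _ => I) (fun _ _ => I) h1 h2))).
Qed.

Lemma ud_typ G0 Gs D A : typ_decl Gs D A -> forall r Dl, goodr G0 Gs Dl r -> tty G0 Dl (ud r D) A.
Proof.
  induction 1; intros r Dt Hg; simpl.
  - eapply ut_typ; eauto.
  - apply IHtyp_decl. intros w B Hl. simpl in Hl. unfold upd. destruct (w =? x).
    + inversion Hl; subst. constructor.
    + auto.
  - apply IHtyp_decl2. intros w B0 Hl. simpl in Hl. unfold upd. destruct (w =? x).
    + inversion Hl; subst. constructor.
      * simpl. lia.
      * apply IHtyp_decl1. intros v B1 Hv. unfold extend in Hv.
        rewrite rev_combine in Hv by (simpl; lia). rewrite lookup_combine in Hv by (rewrite !length_rev; simpl; lia).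
        unfold lamenv. destruct (idx v (rev (y :: ys))) eqn:Ei.
        -- constructor. rewrite nth_error_app1; auto. apply idx_Some_lt in Ei. rewrite !length_rev in *. simpl in *. lia.
        -- eapply (proj1 (tty_ren G0)); eauto. intros i B2 Hi.
           rewrite nth_error_app2 by (rewrite length_rev; simpl; lia).
           rewrite length_rev. simpl length. rewrite <- Hi. f_equal. lia.
    + auto.
Qed.

Theorem corollary1 (G : ctx) (D : decl) (A : ty) :
  typ_decl G D A ->
  ~ (exists f : nat -> decl, f 0 = D /\ forall n, red (f n) (f (S n))).
Proof.
  intros Ht [f [H0 Hr]].
  assert (Htt : tty G [] (ud TFv D) A).
  { eapply ud_typ; eauto. intros w B Hl. constructor. auto. }
  destruct (tty_terminates _ _ _ Htt) as [k [r He]].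
  apply (no_inf_tstep k _ _ He). exists (fun n => ud TFv (f n)). split.
  - rewrite H0. auto.
  - intro n. destruct (Hr n) as [D1 [D2 [Hs1 [Hst Hs2]]]].
    rewrite (sc_ud _ _ TFv Hs1), <- (sc_ud _ _ TFv Hs2).
    apply step_sim; auto. intro w. reflexivity.
Qed.
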